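(* Let $F$ be a global function field with full constant field $k=\mathbb{F}_q$, let $x\in F$ be transcendental over $k$ with $n=[F:k(x)]$ and $\gcd(n,q)=1$, and let $S=\{P_1,\dots,P_{|S|}\}$ be a finite set of places of $F$ containing all infinite places of $F/k(x)$. If $\{b_1,\dots,b_{|S|-1}\}$ is an LLL-reduced basis of the $S$-unit lattice $\Lambda_S$, then \[ \max_{1\le i\le |S|-1}\|b_i\|_\infty\le 2^{(|S|-1)(|S|-2)/4}R_S. \]
   Context: The infinite places of $F/k(x)$ are the poles of $x$. $O_S^\times$ denotes the group of $S$-units of $F$. With a fixed ordering of $S$, let $\Phi_S:F^\times\to\mathbb{Z}^{|S|}$, $\alpha\mapsto(-v_{P_1}(\alpha)\deg P_1,\dots,-v_{P_{|S|}}(\alpha)\deg P_{|S|})$, where $v_P$ is the discrete valuation at $P$. The $S$-unit lattice is $\Lambda_S=\Phi_S(O_S^\times)$, a lattice of rank $|S|-1$ in $\mathbb{Z}^{|S|}$, and $R_S=\det\Lambda_S$ is its determinant (covolume). For $v\in\mathbb{Z}^{|S|}$, $\|v\|_\infty$ is the maximum absolute value of its entries. *)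

(* Defs.v *)
From HB Require Import structures.
From mathcomp Require Import all_boot all_order all_algebra all_field.
From mathcomp Require Import reals.
Set Implicit Arguments. Unset Strict Implicit. Unset Printing Implicit Defensive.
Import Order.TTheory GRing.Theory Num.Theory.
Local Open Scope ring_scope.

(* Function field setting.  K is the finite field k = F_q, kX := k(x) is the *)
(* rational function field {fraction {poly K}}, and F is a finite extension *)
(* of k(x) (a fieldExtType over kX); x is the image of the indeterminate.    *)
Section FunctionField.
Variables (K : finFieldType) (F : fieldExtType {fraction {poly K}}).

Definition kF (c : K) : F := (@FracField.tofrac _ (c%:P))%:A.

Definition xF : F := (@FracField.tofrac _ ('X : {poly K}))%:A.

Definition full_constant_field : Prop :=
  forall a : F, (exists p : {poly K}, p != 0 /\ root (map_poly kF p) a) ->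
    exists c : K, a = kF c.

(* A place of F/k, represented by its normalized discrete valuation
   v_P : F -> int (the value at 0 is irrelevant and never used). *)
Definition is_place (v : F -> int) : Prop :=
  [/\ (forall a b, a != 0 -> b != 0 -> v (a * b) = v a + v b),
      (forall a b, a != 0 -> b != 0 -> a + b != 0 ->
         Num.min (v a) (v b) <= v (a + b)),
      (forall c : K, c != 0 -> v (kF c) = 0) &
      (exists t : F, t != 0 /\ v t = 1)].

Definition same_place (v w : F -> int) : Prop :=
  forall a : F, a != 0 -> v a = w a.

Definition in_valring (v : F -> int) (a : F) : bool := (a == 0) || (0 <= v a).
Definition in_maxideal (v : F -> int) (a : F) : bool := (a == 0) || (0 < v a).

Definition residue_indep (v : F -> int) (m : nat) (a : 'I_m -> F) : Prop :=
  (forall i, in_valring v (a i)) /\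
  (forall c : 'I_m -> K, (exists i, c i != 0) ->
     ~~ in_maxideal v (\sum_i kF (c i) * a i)).

Definition place_degree (v : F -> int) (d : nat) : Prop :=
  (exists a : 'I_d -> F, residue_indep v a) /\
  (forall a : 'I_d.+1 -> F, ~ residue_indep v a).

Definition infinite_place (v : F -> int) : Prop := is_place v /\ v xF < 0.

Definition is_Sunit (s : nat) (P : 'I_s -> F -> int) (a : F) : Prop :=
  a != 0 /\
  forall w, is_place w -> (forall i, ~ same_place w (P i)) -> w a = 0.

Definition PhiS (s : nat) (P : 'I_s -> F -> int) (deg : 'I_s -> nat) (a : F)
  : 'rV[int]_s := \row_i (- (P i a * (deg i)%:Z)).

Definition in_SunitLattice (s : nat) (P : 'I_s -> F -> int)
  (deg : 'I_s -> nat) (u : 'rV[int]_s) : Prop :=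
  exists a : F, is_Sunit P a /\ PhiS P deg a = u.

End FunctionField.

Definition is_lattice_basis (s m : nat) (L : 'rV[int]_s -> Prop)
  (b : 'I_m -> 'rV[int]_s) : Prop :=
  [/\ (forall i, L (b i)),
      (forall z : 'I_m -> int, \sum_i z i *: b i = 0 -> forall i, z i = 0) &
      (forall u, L u -> exists z : 'I_m -> int, u = \sum_i z i *: b i)].

Section LLL.
Variable R : realType.

Definition dotr (s : nat) (u v : 'rV[R]_s) : R := \sum_j u 0 j * v 0 j.

Definition toR (s : nat) (u : 'rV[int]_s) : 'rV[R]_s := map_mx intr u.

(* Gram--Schmidt orthogonalization of a sequence of vectors:
   b*_i = b_i - sum_{j<i} mu_{ij} b*_j,  mu_{ij} = <b_i,b*_j>/<b*_j,b*_j> *)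
Fixpoint gs_aux (s : nat) (acc : seq 'rV[R]_s) (bs : seq 'rV[R]_s)
  : seq 'rV[R]_s :=
  match bs with
  | [::] => acc
  | v :: vs =>
      gs_aux (rcons acc (v - \sum_(w <- acc) (dotr v w / dotr w w) *: w)) vs
  end.

Definition gso (s m : nat) (b : 'I_m -> 'rV[R]_s) (i : nat) : 'rV[R]_s :=
  nth 0 (gs_aux [::] [seq b j | j <- enum 'I_m]) i.

Definition gs_mu (s m : nat) (b : 'I_m -> 'rV[R]_s) (i j : 'I_m) : R :=
  dotr (b i) (gso b j) / dotr (gso b j) (gso b j).

Definition LLL_reduced (s m : nat) (b : 'I_m -> 'rV[R]_s) : Prop :=
  (forall i j : 'I_m, (j < i)%N -> `|gs_mu b i j| <= 1 / 2) /\
  (forall (i j : 'I_m), i = j.+1 :> nat ->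
     (3 / 4 - gs_mu b i j ^+ 2) * dotr (gso b j) (gso b j)
       <= dotr (gso b i) (gso b i)).

Definition lattice_det (s m : nat) (b : 'I_m -> 'rV[R]_s) : R :=
  Num.sqrt (\det (\matrix_(i < m, j < m) dotr (b i) (b j))).

End LLL.

Definition sup_norm (s : nat) (u : 'rV[int]_s) : int :=
  \big[Num.max/0]_(j < s) `|u 0 j|.

(* Main.v *)
Require Import Defs.
From HB Require Import structures.
From mathcomp Require Import all_boot all_order all_algebra all_field.
From mathcomp Require Import reals.
From mathcomp Require Import ring lra zify.
Set Implicit Arguments. Unset Strict Implicit. Unset Printing Implicit Defensive.
Import Order.TTheory GRing.Theory Num.Theory.
Local Open Scope ring_scope.

Section GS.
Variables (R : realType) (s : nat).
Implicit Types (u v w : 'rV[R]_s).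

Lemma dotrC u v : dotr u v = dotr v u.
Proof. by apply: eq_bigr => j _; rewrite mulrC. Qed.

Lemma dotrBl u v w : dotr (u - v) w = dotr u w - dotr v w.
Proof.
rewrite /dotr -sumrB; apply: eq_bigr => j _; rewrite !mxE; ring.
Qed.

Lemma dotrZl (a : R) u w : dotr (a *: u) w = a * dotr u w.
Proof. rewrite /dotr mulr_sumr; apply: eq_bigr => j _; rewrite !mxE; ring. Qed.

Lemma dotr_suml (I : Type) (r : seq I) (P : pred I) (F : I -> 'rV[R]_s) w :
  dotr (\sum_(i <- r | P i) F i) w = \sum_(i <- r | P i) dotr (F i) w.
Proof.
rewrite /dotr exchange_big /=; apply: eq_bigr => j _.
by rewrite summxE mulr_suml.
Qed.

Lemma dotr_ge0 u : 0 <= dotr u u.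
Proof. by apply: sumr_ge0 => j _; rewrite -expr2 sqr_ge0. Qed.

Lemma dotr_eq0 u w : dotr w w = 0 -> dotr u w = 0.
Proof.
move=> h.
have h2 : forall j, w 0 j * w 0 j = 0.
  by move=> j; apply: (psumr_eq0P _ h) => // k _; rewrite -expr2 sqr_ge0.
rewrite /dotr big1 // => j _.
have := h2 j; rewrite -expr2 => /eqP; rewrite sqrf_eq0 => /eqP ->.
by rewrite mulr0.
Qed.

Lemma gs_prefix (acc bs : seq 'rV[R]_s) :
  exists t, gs_aux acc bs = acc ++ t /\ size t = size bs.
Proof.
elim: bs acc => [|v vs IH] acc /=; first by exists [::]; rewrite cats0.
set x := (v - _).
have [t [-> st]] := IH (rcons acc x).
by exists (x :: t); rewrite cat_rcons /= st.
Qed.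

Lemma gs_nth (bs acc : seq 'rV[R]_s) i : (i < size bs)%N ->
  nth 0 (gs_aux acc bs) (size acc + i) = nth 0 bs i -
   \sum_(w <- take (size acc + i) (gs_aux acc bs))
       (dotr (nth 0 bs i) w / dotr w w) *: w.
Proof.
elim: bs acc i => [|v vs IH] acc i //= hi.
case: i hi => [|i] hi.
  set x := (v - _).
  have [t [-> st]] := gs_prefix (rcons acc x) vs.
  by rewrite addn0 cat_rcons nth_cat ltnn subnn /= take_size_cat.
have := IH (rcons acc (v - \sum_(w <- acc) (dotr v w / dotr w w) *: w)) i hi.
by rewrite size_rcons addSnnS.
Qed.

End GS.

Section GSO.
Variables (R : realType) (s m : nat) (c : 'I_m -> 'rV[R]_s).

Lemma gso_eq (j : 'I_m) :
  gso c j = c j - \sum_(k < m | (k < j)%N) gs_mu c j k *: gso c k.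
Proof.
rewrite {1}/gso.
set bs := [seq c j | j <- enum 'I_m].
have sbs : size bs = m by rewrite size_map size_enum_ord.
have nbs : nth 0 bs j = c j by rewrite (nth_map j) ?nth_ord_enum // size_enum_ord.
have [t [eL st]] := gs_prefix [::] bs.
have := @gs_nth R s bs [::] j; rewrite sbs ltn_ord /= add0n => ->; last by [].
rewrite nbs; congr (_ - _).
have sj : size (take j (gs_aux [::] bs)) = j.
  by rewrite size_take eL /= st sbs ltn_ord.
rewrite (big_nth 0) sj big_mkord (big_ord_widen m (fun k =>
   (dotr (c j) (nth 0 (take j (gs_aux [::] bs)) k) /
    dotr (nth 0 (take j (gs_aux [::] bs)) k) (nth 0 (take j (gs_aux [::] bs)) k))
   *: nth 0 (take j (gs_aux [::] bs)) k)) ?(ltnW (ltn_ord j)) //.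
by apply: eq_bigr => k hk; rewrite nth_take.
Qed.

Lemma gso_orth_aux n (i k : 'I_m) : (i < n)%N -> (k < i)%N ->
  dotr (gso c i) (gso c k) = 0.
Proof.
elim: n i k => [//|n IH] i k hin hki.
rewrite gso_eq dotrBl dotr_suml.
rewrite (bigD1 k) //= big1 ?addr0; last first.
  move=> l /andP [hli hlk]; rewrite dotrZl.
  case: (ltngtP l k) => hl.
  - by rewrite dotrC IH ?mulr0 // (leq_trans hki).
  - by rewrite IH ?mulr0 // (leq_trans hli).
  - by move: hlk; rewrite -(inj_eq val_inj) /= hl eqxx.
rewrite dotrZl /gs_mu.
have [h0|hn0] := eqVneq (dotr (gso c k) (gso c k)) 0.
  by rewrite h0 (dotr_eq0 _ h0) mul0r mulr0 subr0.
by rewrite divfK // subrr.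
Qed.

Lemma gso_orth (i k : 'I_m) : (k < i)%N -> dotr (gso c i) (gso c k) = 0.
Proof. exact: gso_orth_aux (ltnSn i). Qed.

Definition Mmu : 'M[R]_m :=
  \matrix_(i, j) (if (j < i)%N then gs_mu c i j else (i == j)%:R).
Definition Bc : 'M[R]_(m, s) := \matrix_(i, k) c i 0 k.
Definition Bs : 'M[R]_(m, s) := \matrix_(i, k) gso c i 0 k.
Definition dd : 'rV[R]_m := \row_i dotr (gso c i) (gso c i).

Lemma Bc_eq : Bc = Mmu *m Bs.
Proof.
apply/matrixP => i k; rewrite /Bc /Mmu /Bs !mxE.
have hc : c i = gso c i + \sum_(j < m | (j < i)%N) gs_mu c i j *: gso c j.
  by rewrite [in RHS]gso_eq subrK.
rewrite hc mxE summxE [RHS](bigD1 i) //= !mxE ltnn eqxx mul1r; congr (_ + _).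
rewrite big_mkcond [RHS]big_mkcond; apply: eq_bigr => j _ /=.
rewrite !mxE.
case: (ltnP j i) => hji.
  by case: eqP => [e|_] //; move: hji; rewrite e ltnn.
case: eqP => [->|hne] //=.
rewrite (_ : (i == j) = false) ?mul0r //.
by apply/negP => /eqP e; apply: hne.
Qed.

Lemma Bs_gram : Bs *m Bs^T = diag_mx dd.
Proof.
apply/matrixP => i j; rewrite /Bs /dd !mxE.
under eq_bigr do rewrite !mxE.
case: (eqVneq i j) => [<-|hne]; first by rewrite mulr1n.
rewrite mulr0n.
case: (ltngtP i j) => h.
- by transitivity (dotr (gso c i) (gso c j)); rewrite // dotrC gso_orth.
- by transitivity (dotr (gso c i) (gso c j)); rewrite // gso_orth.
- by move: hne; rewrite -(inj_eq val_inj) /= h eqxx.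
Qed.

Definition Gram : 'M[R]_m := \matrix_(i, j) dotr (c i) (c j).

Lemma Gram_eq : Gram = Mmu *m diag_mx dd *m Mmu^T.
Proof.
have -> : Gram = Bc *m Bc^T.
  apply/matrixP => i j; rewrite !mxE /dotr; apply: eq_bigr => k _.
  by rewrite !mxE.
by rewrite Bc_eq trmx_mul mulmxA -[_ *m Bs *m _]mulmxA Bs_gram.
Qed.

Lemma det_Gram : \det Gram = \prod_i dd 0 i.
Proof.
rewrite Gram_eq !det_mulmx det_tr det_diag.
have -> : \det Mmu = 1.
  rewrite det_trig.
    by rewrite big1 // => i _; rewrite mxE ltnn eqxx.
  apply/forallP => i; apply/forallP => j; apply/implyP => h.
  rewrite mxE ltnNge ltnW //= (_ : (i == j) = false) //.
  by apply/negP => /eqP e; move: h; rewrite e ltnn.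
by rewrite mul1r mulr1.
Qed.

Lemma Gram_diag i : dotr (c i) (c i) = \sum_j Mmu i j ^+ 2 * dd 0 j.
Proof.
have := congr1 (fun M : 'M[R]_m => M i i) Gram_eq; rewrite /= !mxE => ->.
apply: eq_bigr => j _; rewrite mul_mx_diag !mxE; ring.
Qed.

End GSO.

Section Bounds.
Variables (R : realType) (s m : nat) (c : 'I_m -> 'rV[R]_s).
Hypothesis hL : LLL_reduced c.

Lemma dd_ge0 i : 0 <= dd c 0 i.
Proof. by rewrite mxE dotr_ge0. Qed.

Lemma mu_sq (i j : 'I_m) : (j < i)%N -> gs_mu c i j ^+ 2 <= 1 / 4.
Proof.
move=> h; have := hL.1 i j h; rewrite ler_norml => /andP [h1 h2].
nra.
Qed.

Lemma dd_step (i j : 'I_m) : i = j.+1 :> nat -> dd c 0 j <= 2 * dd c 0 i.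
Proof.
move=> e; have := hL.2 i j e.
have hmu : gs_mu c i j ^+ 2 <= 1 / 4 by apply: mu_sq; rewrite e.
have h0 := dd_ge0 j; rewrite !mxE in h0 *.
move: hmu h0; set mu := gs_mu c i j; set a := dotr _ _; set b := dotr _ _.
move=> hmu h0 h2.
have h1 : 0 <= (1/4 - mu ^+ 2) * a by apply: mulr_ge0 => //; rewrite subr_ge0.
nra.
Qed.

Lemma dd_chain (n : nat) : forall (j i : 'I_m), i = (j + n)%N :> nat ->
  dd c 0 j <= 2 ^+ n * dd c 0 i.
Proof.
elim: n => [|n IH] j i e.
  by rewrite expr0 mul1r (_ : j = i) //; apply: val_inj; rewrite /= e addn0.
have hj : (j.+1 < m)%N.
  by apply: leq_trans (ltn_ord i); rewrite e addnS ltnS leq_addr.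
have := @dd_step (Ordinal hj) j erefl.
have := IH (Ordinal hj) i (etrans e (esym (addSnnS _ _))).
have := dd_ge0 (Ordinal hj).
set x := dd c 0 (Ordinal hj); set y := dd c 0 j; set z := dd c 0 i.
rewrite exprS => h0 h1 h2.
apply: (le_trans h2); rewrite -mulrA ler_pM2l //.
Qed.

Lemma geo_sum i : \sum_(j < i) (2 : R) ^+ (i - j) = 2 ^+ i.+1 - 2.
Proof.
elim: i => [|i IH]; first by rewrite big_ord0 expr1 subrr.
rewrite big_ord_recl subn0.
under eq_bigr => j _ do rewrite lift0 subSS.
rewrite IH [in RHS]exprS; lra.
Qed.

Lemma geo i : 1 + \sum_(j < i) (2 : R) ^+ (i - j) / 4 <= 2 ^+ i.
Proof.
rewrite -mulr_suml geo_sum exprS.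
have : (1 : R) <= 2 ^+ i by apply: exprn_ege1; lra.
lra.
Qed.

Lemma Gram_bound (i : 'I_m) : dotr (c i) (c i) <= 2 ^+ i * dd c 0 i.
Proof.
rewrite Gram_diag.
pose B (j : 'I_m) := (if (j < i)%N then 2 ^+ (i - j) / 4 * dd c 0 i else 0)
     + (if j == i then dd c 0 i else 0).
have key : forall j : 'I_m, Mmu c i j ^+ 2 * dd c 0 j <= B j.
  move=> j; rewrite /B /Mmu !mxE.
  case: (ltnP j i) => hji.
    rewrite (_ : (j == i) = false) ?addr0; last first.
      by apply/negP => /eqP e; move: hji; rewrite e ltnn.
    have h1 := mu_sq hji.
    have h2 := dd_chain (j := j) (i := i) (esym (subnKC (ltnW hji))).
    have h3 := dd_ge0 j; have h4 := dd_ge0 i.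
    have h5 : 0 <= gs_mu c i j ^+ 2 by apply: sqr_ge0.
    rewrite !mxE in h2 h3 h4.
    rewrite [X in _ <= X](_ : _ = (1/4) * (2 ^+ (i - j) * dotr (gso c i) (gso c i)));
      last by ring.
    by apply: ler_pM.
  rewrite add0r; case: (eqVneq j i) => [->|hne]; first by rewrite /= mulr1n expr1n mul1r.
  by rewrite /= mulr0n expr0n mul0r.
apply: le_trans (ler_sum _ (fun j _ => key j)) _.
rewrite /B big_split /= -big_mkcond -big_mkcond /= big_pred1_eq.
rewrite -(big_ord_widen m (fun j => 2 ^+ (i - j) / 4 * dd c 0 i)) ?(ltnW (ltn_ord i)) //.
rewrite -mulr_suml -[X in _ + X]mul1r -mulrDl addrC.
by apply: ler_wpM2r; [apply: dd_ge0 | apply: geo].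
Qed.

End Bounds.

Section Final.
Variable (R : realType).

Lemma entry_le (s : nat) (u : 'rV[int]_s) (k : 'I_s) :
  ((u 0 k)%:~R : R) ^+ 2 <= dotr (toR R u) (toR R u).
Proof.
rewrite /dotr (bigD1 k) //= !mxE -expr2 lerDl.
by apply: sumr_ge0 => j _; rewrite -expr2 sqr_ge0.
Qed.

Lemma sup_le (s : nat) (u : 'rV[int]_s) :
  0 <= sup_norm u /\ ((sup_norm u)%:~R : R) ^+ 2 <= dotr (toR R u) (toR R u).
Proof.
rewrite /sup_norm.
apply/andP; apply: (big_ind (fun x : int => (0 <= x) && ((x%:~R : R) ^+ 2 <= dotr (toR R u) (toR R u)))).
- by rewrite lexx /= expr0n /= dotr_ge0.
- by move=> x y hx hy; rewrite /Num.max; case: leP.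
- move=> k _; rewrite normr_ge0 /= intr_norm real_normK ?num_real //.
  exact: entry_le.
Qed.

Lemma nonzero_ge1 (s : nat) (u : 'rV[int]_s) : u != 0 ->
  1 <= dotr (toR R u) (toR R u).
Proof.
move=> hu.
have [k hk] : exists k, u 0 k != 0.
  apply/existsP; apply: contraR hu; rewrite negb_exists => /forallP h.
  apply/eqP/matrixP => i k; rewrite !mxE (ord1 i).
  by have := h k; rewrite negbK => /eqP.
apply: le_trans (entry_le u k).
have h1 : (1 <= u 0 k ^+ 2)%R.
  rewrite expr2; move: hk; set z := u 0 k; move=> hk.
  have : z != 0 := hk. lia.
by rewrite -rmorphXn /= -[1]/((1%:~R) : R) ler_int.
Qed.

Lemma tri_sum n : ((\sum_(i < n) (i : nat)) * 2)%N = (n * n.-1)%N.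
Proof.
elim: n => [|n IH]; first by rewrite big_ord0.
rewrite big_ord_recr /= mulnDl IH; case: n {IH} => [//|n] /=; lia.
Qed.

End Final.

Unset Implicit Arguments.
Set Strict Implicit.

Theorem corollary2p3
  (R : realType)
  (K : finFieldType) (F : fieldExtType {fraction {poly K}})
  (hfull : full_constant_field F)
  (hcop : coprime (\dim {:F}) #|K|)
  (s : nat) (P : 'I_s -> F -> int) (deg : 'I_s -> nat)
  (hP : forall i, is_place (P i))
  (hdeg : forall i, place_degree (P i) (deg i))
  (hdist : forall i j, same_place (P i) (P j) -> i = j)
  (hinf : forall w, infinite_place w -> exists i, same_place w (P i))
  (b : 'I_s.-1 -> 'rV[int]_s)
  (hbasis : is_lattice_basis (in_SunitLattice P deg) b)
  (hLLL : LLL_reduced (fun i => toR R (b i))) :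
  forall i : 'I_s.-1,
    ((sup_norm (b i))%:~R : R)
      <= Num.sqrt (Num.sqrt (2 ^+ ((s - 1) * (s - 2))))
         * lattice_det (fun i => toR R (b i)).
Proof.
move=> k.
set c := fun i => toR R (b i).
have hne : forall i, b i != 0.
  move=> i; apply/eqP => h0; case: hbasis => _ hind _.
  have e : \sum_j (j == i)%:Z *: b j = 0.
    rewrite (bigD1 i) //= big1 ?addr0; first by rewrite h0 scaler0.
    by move=> j /negbTE ->; rewrite scale0r.
  have := hind _ e i; rewrite eqxx => h; discriminate h.
have hge1 : forall i, 1 <= dotr (c i) (c i) := fun i => nonzero_ge1 R (hne i).
have [hsup0 hsup] := sup_le R (b k).
have hG : dotr (c k) (c k) <= \prod_i dotr (c i) (c i).
  rewrite (bigD1 k) //=; apply: ler_peMr; first exact: dotr_ge0.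
  apply: (big_ind (fun x => 1 <= x)); [exact: lexx | exact: mulr_ege1 | ].
  by move=> i _; exact: hge1.
set T := \sum_(i < s.-1) (i : nat).
have hP' : \prod_i dotr (c i) (c i) <= 2 ^+ T * \det (Gram c).
  rewrite det_Gram /T -prodrXr -big_split /=.
  apply: ler_prod => i _; rewrite dotr_ge0 /=; exact: (Gram_bound hLLL).
have hdet0 : 0 <= \det (Gram c).
  by rewrite det_Gram; apply: prodr_ge0 => i _; apply: dd_ge0.
have hexp : (2:R) ^+ ((s - 1) * (s - 2)) = (2 ^+ T) ^+ 2.
  rewrite -exprM; congr (_ ^+ _).
  have := tri_sum s.-1; rewrite -/T; lia.
rewrite hexp sqrtr_sqr ger0_norm ?exprn_ge0 //.
rewrite /lattice_det -sqrtrM ?exprn_ge0 //.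
have h0 : 0 <= ((sup_norm (b k))%:~R : R) by rewrite ler0z.
rewrite -[X in X <= _]ger0_norm // -sqrtr_sqr ler_sqrt; last first.
  by apply: mulr_ge0 => //; apply: exprn_ge0.
exact: le_trans hsup (le_trans hG hP').
Qed.
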